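(* Let $m \geq 2$ be an integer and $n = m^2$. For $k = 0,1,\ldots,m-1$ let $u_k = e^{i 2 k \pi/m}$. For $\mathbf{t} = (t_0,t_1,\ldots,t_{m-2}) \in (\mathbb{C}\setminus\{0\})^{m-1}$ define the point $\mathbf{x}(\mathbf{t}) = (x_0,\ldots,x_{n-1}) \in \mathbb{C}^n$ by \[ x_{km+j} = u_k\, t_0 t_1 \cdots t_j \quad (j = 0,1,\ldots,m-2), \qquad x_{km+m-1} = u_k\, t_0^{-m+1} t_1^{-m+2} \cdots t_{m-3}^{-2} t_{m-2}^{-1}, \] for $k = 0,1,\ldots,m-1$ (so the exponent of $t_j$ in $x_{km+m-1}$ is $-(m-1-j)$). Then every point $\mathbf{x}(\mathbf{t})$, $\mathbf{t} \in (\mathbb{C}\setminus\{0\})^{m-1}$, is a cyclic $n$-root, and the set $\{\mathbf{x}(\mathbf{t}) : \mathbf{t} \in (\mathbb{C}\setminus\{0\})^{m-1}\}$ is an $(m-1)$-dimensional set of cyclic $n$-roots.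
   Context: For a positive integer $n$, the cyclic $n$-roots system in the variables $x_0,\ldots,x_{n-1}$ consists of the $n$ equations \[ \sum_{j=0}^{n-1} \prod_{k=j}^{j+i-1} x_{k \bmod n} = 0 \quad (i = 1,2,\ldots,n-1), \qquad x_0 x_1 \cdots x_{n-1} - 1 = 0. \] (For $i=1$ this is $x_0+\cdots+x_{n-1}=0$, for $i=2$ it is $x_0x_1+x_1x_2+\cdots+x_{n-2}x_{n-1}+x_{n-1}x_0=0$.) A cyclic $n$-root is a point of $\mathbb{C}^n$ satisfying all these equations. *)

(* Defs.v *)
From mathcomp Require Import all_boot all_algebra complex.
From mathcomp Require Import all_classical all_reals all_analysis.
Set Implicit Arguments. Unset Strict Implicit. Unset Printing Implicit Defensive.
Import GRing.Theory Num.Theory.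
Local Open Scope ring_scope.

(* A point of C^n is represented by x : nat -> R[i]; only x 0, ..., x (n-1) matter. *)
Definition cyclic_root (R : realType) (n : nat) (x : nat -> R[i]) : Prop :=
  (forall i : nat, (1 <= i < n)%N ->
     \sum_(j < n) \prod_(l < i) x ((j + l) %% n)%N = 0)
  /\ \prod_(j < n) x j = 1.

Definition uroot (R : realType) (m k : nat) : R[i] :=
  (cos (2 * k%:R * pi / m%:R) +i* sin (2 * k%:R * pi / m%:R))%C.

Definition xpt (R : realType) (m : nat) (t : nat -> R[i]) (p : nat) : R[i] :=
  let k := (p %/ m)%N in
  let j := (p %% m)%N in
  if (j < m.-1)%N then uroot R m k * \prod_(i < j.+1) t i
  else uroot R m k * \prod_(i < m.-1) (t i) ^- (m.-1 - i)%N.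

(* Main.v *)
Require Import Defs.
From mathcomp Require Import all_boot all_algebra complex.
From mathcomp Require Import all_classical all_reals all_analysis.
From mathcomp Require Import ring lra.
Import GRing.Theory Num.Theory.
Local Open Scope ring_scope.

Lemma urootD (R : realType) m a b : uroot R m (a + b) = uroot R m a * uroot R m b.
Proof.
rewrite /uroot natrD.
have -> : 2 * (a%:R + b%:R) * pi / m%:R = 2 * a%:R * pi / m%:R + 2 * b%:R * pi / (m%:R : R).
  by ring.
rewrite cosD sinD [RHS]/GRing.mul /=.
congr (_ +i* _)%C; ring.
Qed.

Lemma uroot0 (R : realType) m : uroot R m 0 = 1.
Proof. by rewrite /uroot !mulr0 !mul0r cos0 sin0. Qed.

Lemma urootX (R : realType) m k : uroot R m k = uroot R m 1 ^+ k.
Proof.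
elim: k => [|k IH]; first by rewrite uroot0 expr0.
by rewrite -addn1 urootD IH exprD expr1.
Qed.

Lemma urootm (R : realType) m : (0 < m)%N -> uroot R m m = 1.
Proof.
move=> m0; rewrite /uroot.
have -> : 2 * m%:R * pi / m%:R = pi *+ 2 :> R.
  rewrite -mulr_natr; field.
  by rewrite pnatr_eq0 -lt0n.
rewrite sin2pi cos_mulr2n cospi.
rewrite sqrrN expr1n.
have -> : (2 - 1 : R) = 1 by ring.
by [].
Qed.

Lemma uroot_neq1 (R : realType) m r : (0 < r < m)%N -> uroot R m r != 1.
Proof.
case/andP => r0 rm; apply/negP => /eqP H.
have := congr1 (@complex.Re R) H; rewrite /= => Hc.
have m0 : (0 < m%:R :> R) by rewrite ltr0n (ltn_trans r0 rm).
set a := r%:R * pi / m%:R : R.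
have ea : 2 * r%:R * pi / m%:R = a *+ 2 :> R.
  rewrite /a -mulr_natr; field; exact: lt0r_neq0.
rewrite ea cos_mulr2n in Hc.
have hs : 0 < sin a.
  apply: sin_gt0_pi; apply/andP; split.
    by rewrite /a divr_gt0 // ?mulr_gt0 ?ltr0n ?pi_gt0.
  by rewrite /a ltr_pdivrMr // mulrC ltr_pM2l ?pi_gt0 // ltr_nat.
have := cos2Dsin2 a.
nra.
Qed.

Lemma big_blocks (T : Type) (idx : T) (op : Monoid.law idx) (F : nat -> T) m K :
  \big[op/idx]_(j < K * m) F j = \big[op/idx]_(k < K) \big[op/idx]_(r < m) F (k * m + r)%N.
Proof.
elim: K => [|K IH]; first by rewrite mul0n !big_ord0.
by rewrite big_ord_recr /= -IH mulSnr big_split_ord.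
Qed.

Lemma geo0 (R : realType) (z : R[i]) N : z ^+ N = 1 -> z != 1 -> \sum_(k < N) z ^+ k = 0.
Proof.
move=> zN z1; have := subrX1 z N; rewrite zN subrr => /esym /eqP.
by rewrite mulf_eq0 subr_eq0 (negbTE z1) /= => /eqP.
Qed.

Definition Tv (R : realType) (m : nat) (t : nat -> R[i]) (c : nat) : R[i] :=
  if (c < m.-1)%N then \prod_(i < c.+1) t i
  else \prod_(i < m.-1) (t i) ^- (m.-1 - i)%N.
Arguments Tv [R].

Lemma xptE (R : realType) m (t : nat -> R[i]) p :
  xpt m t p = uroot R m 1 ^+ (p %/ m) * Tv m t (p %% m).
Proof. by rewrite /xpt /Tv urootX; case: ifP. Qed.

Lemma wm (R : realType) m : (0 < m)%N -> uroot R m 1 ^+ m = 1.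
Proof. by move=> m0; rewrite -urootX urootm. Qed.

Lemma wdvd (R : realType) m i : (0 < m)%N -> uroot R m 1 ^+ i = 1 -> (m %| i)%N.
Proof.
move=> m0; rewrite (divn_eq i m) exprD mulnC exprM wm // expr1n mul1r.
have [e|e] := eqVneq (i %% m)%N 0%N.
  by move=> _; rewrite e addn0 dvdn_mulr.
move=> H; exfalso; move: H; rewrite -urootX; apply/eqP; apply: uroot_neq1.
by rewrite lt0n e ltn_pmod.
Qed.

Lemma Tv_neq0 (R : realType) m (t : nat -> R[i]) c :
  (forall j, (j < m.-1)%N -> t j != 0) -> Tv m t c != 0.
Proof.
move=> ht; rewrite /Tv; case: ifP => hc; apply/prodf_neq0 => i _.
  by apply: ht; apply: (leq_trans _ hc); exact: ltn_ord.
by rewrite invr_eq0 expf_neq0 // ht.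
Qed.

Lemma tri (R : realType) (t : nat -> R[i]) M :
  \prod_(b < M) \prod_(i < b.+1) t i = \prod_(i < M) t i ^+ (M - i).
Proof.
elim: M => [|M IH]; first by rewrite !big_ord0.
rewrite big_ord_recr /= IH !big_ord_recr /= subSnn expr1.
rewrite mulrA -big_split /=; congr (_ * _); apply: eq_bigr => i _.
by rewrite subSn ?exprSr // ltnW.
Qed.

Lemma prodTv (R : realType) m (t : nat -> R[i]) :
  (0 < m)%N -> (forall j, (j < m.-1)%N -> t j != 0) -> \prod_(c < m) Tv m t c = 1.
Proof.
case: m => // m _ ht; rewrite big_ord_recr /=.
rewrite (eq_bigr (fun b : 'I_m => \prod_(i < b.+1) t i)); last first.
  by move=> b _; rewrite /Tv /= ltn_ord.
rewrite tri /Tv /= ltnn -big_split /=; apply: big1 => i _.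
by rewrite mulfV // expf_neq0 // ht.
Qed.

Theorem proposition2 (R : realType) (m : nat) (hm : (2 <= m)%N) :
  (forall t : nat -> R[i], (forall j, (j < m.-1)%N -> t j != 0) ->
     cyclic_root (m ^ 2)%N (xpt m t))
  /\
  (forall t t' : nat -> R[i],
     (forall j, (j < m.-1)%N -> t j != 0) ->
     (forall j, (j < m.-1)%N -> t' j != 0) ->
     (forall p, (p < m ^ 2)%N -> xpt m t p = xpt m t' p) ->
     forall j, (j < m.-1)%N -> t j = t' j).
Proof.
have m0 : (0 < m)%N by apply: leq_trans hm.
set w := uroot R m 1.
have wm1 : w ^+ m = 1 by exact: wm.
have w0 : w != 0.
  by apply/eqP => e; move: wm1; rewrite e expr0n eqn0Ngt m0 /= => /eqP; rewrite eq_sym oner_eq0.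
have wkm k : w ^+ (k * m) = 1 by rewrite mulnC exprM wm1 expr1n.
have Tsmall (t : nat -> R[i]) j : (j < m)%N -> xpt m t j = Tv m t j.
  by move=> jm; rewrite xptE divn_small // modn_small // expr0 mul1r.
split.
  move=> t ht; set x := xpt m t.
  have xS p : x (p + m)%N = w * x p.
    by rewrite /x !xptE divnDr ?dvdnn // divnn m0 addn1 exprS modnDr mulrA.
  have xk k p : x (p + k * m)%N = w ^+ k * x p.
    elim: k => [|k IH]; first by rewrite mul0n addn0 expr0 mul1r.
    by rewrite mulSnr addnA xS IH exprS mulrA.
  have xper p : x (p %% (m * m))%N = x p.
    by rewrite [in RHS](divn_eq p (m * m)) addnC mulnA xk wkm mul1r.
  have x0 p : x p != 0 by rewrite /x xptE mulf_neq0 ?expf_neq0 ?Tv_neq0.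
  have G q : \prod_(b < m) x (q + b)%N = w ^+ q.
    elim: q => [|q IH].
      rewrite expr0 -[RHS](@prodTv R m t m0 ht); apply: eq_bigr => b _.
      by rewrite add0n /x Tsmall.
    have E1 : \prod_(b < m.+1) x (q + b)%N = x q * \prod_(b < m) x (q.+1 + b)%N.
      rewrite big_ord_recl addn0; congr (_ * _); apply: eq_bigr => b _.
      by rewrite lift0 addSnnS.
    have E2 : \prod_(b < m.+1) x (q + b)%N = \prod_(b < m) x (q + b)%N * x (q + m)%N.
      by rewrite big_ord_recr.
    rewrite E2 xS IH in E1; rewrite exprS.
    apply: (mulfI (x0 q)); rewrite -E1; ring.
  rewrite /cyclic_root -mulnn; split; last first.
    rewrite (big_blocks _ _ _ _ m m); rewrite (eq_bigr (fun _ => 1)) ?big1 // => k _.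
    by rewrite G wkm.
  move=> i /andP [i1 iM].
  rewrite (eq_bigr (fun j : 'I_(m * m) => \prod_(l < i) x (j + l)%N)); last first.
    by move=> j _; apply: eq_bigr => l _; rewrite xper.
  have [/dvdnP [s es]|ndiv] := boolP (m %| i)%N.
    have s0 : (0 < s)%N by move: i1; rewrite es muln_gt0 => /andP [].
    have sm : (s < m)%N by move: iM; rewrite es ltn_pmul2r.
    rewrite (eq_bigr (fun j : 'I_(m * m) => (w ^+ s) ^+ j)); last first.
      move=> j _; rewrite es (big_blocks _ _ _ (fun l => x (j + l)%N) m s).
      rewrite (eq_bigr (fun _ => w ^+ j)); last first.
        move=> a _; have -> : w ^+ j = w ^+ (j + a * m) by rewrite exprD wkm mulr1.
        rewrite -(G (j + a * m)%N).
        by apply: eq_bigr => r _; rewrite addnA.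
      by rewrite prodr_const card_ord exprAC.
    apply: geo0; first by rewrite -exprM mulnA wkm.
    apply/negP => /eqP /(@wdvd R m s m0) /(dvdn_leq s0); by rewrite leqNgt sm.
  have F k r : \prod_(l < i) x (k * m + r + l)%N = (w ^+ i) ^+ k * \prod_(l < i) x (r + l)%N.
    rewrite (eq_bigr (fun l : 'I_i => w ^+ k * x (r + l)%N)); last first.
      by move=> l _; rewrite -xk [in RHS]addnC addnA.
    by rewrite big_split /= prodr_const card_ord exprAC.
  rewrite (big_blocks _ _ _ (fun j => \prod_(l < i) x (j + l)%N) m m).
  rewrite (eq_bigr (fun k : 'I_m => (w ^+ i) ^+ k * \sum_(r < m) \prod_(l < i) x (r + l)%N)); last first.
    by move=> k _; rewrite mulr_sumr; apply: eq_bigr => r _; rewrite F.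
  rewrite -mulr_suml geo0 ?mul0r //; first by rewrite exprAC wm1 expr1n.
  by apply/negP => /eqP /(@wdvd R m i m0); apply/negP.
move=> t t' ht ht' hx.
have P j : (j < m.-1)%N -> \prod_(i < j.+1) t i = \prod_(i < j.+1) t' i.
  move=> hj; have jm : (j < m)%N by apply: leq_trans hj (leq_pred m).
  have := hx j; rewrite !Tsmall // /Tv hj; apply.
  by rewrite -mulnn (leq_trans jm) // leq_pmulr.
elim/ltn_ind => j IH hj.
have := P j hj; rewrite !big_ord_recr /=.
have -> : \prod_(i < j) t i = \prod_(i < j) t' i.
  apply: eq_bigr => i _; apply: IH => //; apply: ltn_trans hj; exact: ltn_ord.
apply: mulfI; apply/prodf_neq0 => i _; apply: ht'.
by apply: ltn_trans hj; exact: ltn_ord.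
Qed.
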